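(* Let $(X,\mu)$ and $(Y,\nu)$ be $\sigma$-finite measure spaces and let $\tau:Y\to X$ be a measurable map which is nonsingular, i.e. $\nu(\tau^{-1}(E))=0$ for every $\mu$-null set $E\subset X$. Let $0<p<\infty$ and let $\Phi:[0,\infty)\to[0,\infty)$ be a Young function. Then the composition operator $C_\tau f=f\circ\tau$ is bounded from $L^{p,1}(X,\mu)$ to $L^\Phi(Y,\nu)$ (i.e. there is $C>0$ with $\|C_\tau f\|_{L^\Phi(Y)}\le C\|f\|_{L^{p,1}(X)}$ for all $f\in L^{p,1}(X,\mu)$) if and only if there exists a constant $D\ge1$ such that for all $\mu$-measurable sets $E\subset X$, \[ \nu(\tau^{-1}(E))\le\left\{\Phi\left(\frac{1}{D\mu(E)^{1/p}}\right)\right\}^{-1}. \]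
   Context: A Young function is a map $\Phi:[0,\infty)\to[0,\infty)$ that is positive on $(0,\infty)$, convex, and satisfies $\lim_{t\downarrow0}\Phi(t)=\Phi(0)=0$. For a measurable $f$ on $X$, the composition operator is $C_\tau f(y)=f(\tau(y))$, $y\in Y$. The Orlicz space $L^\Phi(Y,\nu)$ consists of measurable $g$ on $Y$ with $\int_Y\Phi(\epsilon|g|)\,d\nu<\infty$ for every $\epsilon>0$, with (quasi-)norm $\|g\|_{L^\Phi(Y)}=\inf\{\lambda>0:\int_Y\Phi(|g(y)|/\lambda)\,d\nu(y)\le1\}$. The Lorentz space $L^{p,1}(X,\mu)$ consists of measurable $f$ on $X$ with $\|f\|_{L^{p,1}(X)}=\int_0^\infty \mu(\{x\in X:|f(x)|>t\})^{1/p}\,dt<\infty$. In the volume condition the usual conventions $1/0=\infty$, $\Phi(\infty)=\infty$, $1/\infty=0$ are used when $\mu(E)\in\{0,\infty\}$. *)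

(* Defs.v *)
From HB Require Import structures.
From mathcomp Require Import all_boot all_order all_algebra.
From mathcomp Require Import all_classical all_reals all_analysis.
Set Implicit Arguments. Unset Strict Implicit. Unset Printing Implicit Defensive.
Import Order.TTheory GRing.Theory Num.Theory.
Import numFieldNormedType.Exports.
Local Open Scope classical_set_scope.
Local Open Scope ring_scope.

(* Young function: Phi : [0,oo) -> [0,oo) (values on negative reals are
   irrelevant), Phi 0 = 0, positive on (0,oo), convex on [0,oo),
   and Phi t -> 0 as t -> 0+. *)
Definition young_function (R : realType) (Phi : R -> R) : Prop :=
  [/\ Phi 0 = 0,
      (forall t, 0 < t -> 0 < Phi t),
      (forall x y a, 0 <= x -> 0 <= y -> 0 <= a <= 1 ->
          Phi (a * x + (1 - a) * y) <= a * Phi x + (1 - a) * Phi y) &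
      Phi t @[t --> 0^'+] --> 0].

Definition lorentz_p1_norm (R : realType) d (X : measurableType d)
    (mu : {measure set X -> \bar R}) (p : R) (f : X -> R) : \bar R :=
  (\int[@lebesgue_measure R]_(t in `[0%R, +oo[%classic)
      poweR (mu [set x | (t < `|f x|)%R]) p^-1)%E.

(* Orlicz (Luxemburg) quasi-norm
   ||g||_{L^Phi(Y)} = inf {lambda > 0 : int_Y Phi(|g|/lambda) dnu <= 1}
   (inf of the empty set is +oo). *)
Definition orlicz_norm (R : realType) d (Y : measurableType d)
    (nu : {measure set Y -> \bar R}) (Phi : R -> R) (g : Y -> R) : \bar R :=
  ereal_inf [set (l%:E)%E | l in
     [set l : R | 0 < l /\
        (\int[nu]_(y in setT) (Phi (`|g y| / l))%:E <= 1)%E]].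

(* The right-hand side {Phi(1/(D mu(E)^{1/p}))}^{-1} of the volume
   condition, with the conventions 1/0 = oo, Phi(oo) = oo, 1/oo = 0:
   it equals 0 if mu(E) = 0 and +oo if mu(E) = +oo. *)
Definition vol_bound (R : realType) (Phi : R -> R) (D p : R) (m : \bar R)
    : \bar R :=
  match m with
  | r%:E => if r == 0 then 0%E
            else ((Phi (1 / (D * powR r p^-1)))^-1)%:E
  | +oo%E => +oo%E
  | -oo%E => 0%E
  end.

(* Main.v *)
Require Import Defs.
From HB Require Import structures.
From mathcomp Require Import all_boot all_order all_algebra.
From mathcomp Require Import all_classical all_reals all_analysis.
From mathcomp Require Import ring lra.
From mathcomp Require Import measurable_realfun.
Set Implicit Arguments. Unset Strict Implicit. Unset Printing Implicit Defensive.
Import Order.TTheory GRing.Theory Num.Theory.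
Import numFieldNormedType.Exports.
Local Open Scope classical_set_scope.
Local Open Scope ring_scope.

Section aux.
Variable R : realType.

Definition lv (j : int) : R := expR (j%:~R * ln 2).

Lemma ln2_gt0 : 0 < ln (2:R).
Proof. by apply: ln_gt0; rewrite ltr1n. Qed.

Lemma lv_gt0 j : 0 < lv j.
Proof. exact: expR_gt0. Qed.

Lemma lvS j : lv (j + 1) = 2 * lv j.
Proof.
rewrite /lv intrD mulrDl expRD (_ : (1%:~R : R) = 1) // mul1r lnK; last by rewrite posrE ltr0n.
by rewrite mulrC.
Qed.

Lemma lv_le j k : (j <= k)%R -> lv j <= lv k.
Proof.
move=> jk; rewrite /lv ler_expR ler_wpM2r ?ler_int //.
exact: ltW ln2_gt0.
Qed.

Lemma lv_exists s : 0 < s -> exists j, lv j < s <= 2 * lv j.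
Proof.
move=> s0; set y := ln s / ln 2.
exists (Num.ceil y - 1)%R.
have sE : s = expR (y * ln 2).
  by rewrite /y mulfVK ?lnK // gt_eqF // ln2_gt0.
rewrite -lvS subrK /lv sE ltr_expR ler_expR.
rewrite ltr_pM2r ?ln2_gt0 // ler_pM2r ?ln2_gt0 //.
exact: ceil_itv.
Qed.

Lemma lv_uniq j k t : lv j / 2 < t <= lv j -> lv k / 2 < t <= lv k -> j = k.
Proof.
have key a b : (a < b)%R -> lv a / 2 < t <= lv a -> lv b / 2 < t <= lv b -> False.
  move=> ab /andP[_ ta] /andP[tb _].
  have : lv (a + 1) <= lv b by apply: lv_le; rewrite -ltzD1 ltrD2r.
  rewrite lvS => h.
  have : lv b / 2 < lv a by exact: lt_le_trans tb ta.
  rewrite ltr_pdivrMr ?ltr0n // => h2.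
  have := le_lt_trans h (lt_le_trans h2 (lexx _)).
  by rewrite mulrC ltxx.
move=> hj hk; case: (ltgtP j k) => // [jk|kj].
- by case: (key _ _ jk hj hk).
- by case: (key _ _ kj hk hj).
Qed.

Variable Phi : R -> R.
Hypothesis yPhi : young_function Phi.

Lemma Phi_ge0 t : 0 <= t -> 0 <= Phi t.
Proof.
case: yPhi => P0 Ppos _ _; rewrite le_eqVlt => /orP[/eqP<-|/Ppos/ltW //].
by rewrite P0.
Qed.

Lemma Phi_scale a x : 0 <= a <= 1 -> 0 <= x -> Phi (a * x) <= a * Phi x.
Proof.
case: yPhi => P0 _ Pc _ a01 x0.
have := Pc x 0 a x0 (lexx _) a01.
by rewrite mulr0 addr0 P0 mulr0 addr0.
Qed.

Lemma Phi_mono u v : 0 <= u -> u <= v -> Phi u <= Phi v.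
Proof.
move=> u0 uv; have v0 := le_trans u0 uv.
case: (eqVneq v 0) => [v0'|vn0].
  by have -> : u = v by apply/eqP; rewrite eq_le uv v0' u0.
have vp : 0 < v by rewrite lt_def vn0 v0.
have -> : u = (u / v) * v by rewrite mulfVK // gt_eqF.
apply: le_trans (Phi_scale _ _) _.
- by rewrite divr_ge0 //= ler_pdivrMr // mul1r.
- exact: v0.
rewrite ler_piMl ?Phi_ge0 //; last by rewrite ler_pdivrMr // mul1r.
Qed.

End aux.

Arguments lv {R}.
Arguments lv_gt0 {R}.
Arguments lvS {R}.
Arguments lv_le {R}.
Arguments ln2_gt0 {R}.

Section integ.
Local Open Scope ereal_scope.
Context d (T : measurableType d) (R : realType).
Variable mu : {measure set T -> \bar R}.

Lemma le_integral_nm (D : set T) (f1 f2 : T -> \bar R) :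
  (forall x, D x -> 0 <= f1 x) -> (forall x, D x -> f1 x <= f2 x) ->
  \int[mu]_(x in D) f1 x <= \int[mu]_(x in D) f2 x.
Proof.
move=> f10 f12.
have f20 x : D x -> 0 <= f2 x by move=> Dx; exact: le_trans (f10 _ Dx) (f12 _ Dx).
rewrite (ge0_integralE _ f10) (ge0_integralE _ f20).
apply: ge_ereal_sup => _ [h /= hf <-]; apply: ereal_sup_ubound.
exists h => //= x; apply: le_trans (hf x) _.
rewrite /patch; case: ifP => // /set_mem Dx; exact: f12.
Qed.

End integ.

Section fwd.
Local Open Scope ereal_scope.
Variables (R : realType) (d1 d2 : measure_display)
    (X : measurableType d1) (Y : measurableType d2)
    (mu : {measure set X -> \bar R}) (nu : {measure set Y -> \bar R})
    (tau : Y -> X) (p : R) (Phi : R -> R).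
Hypothesis mtau : measurable_fun setT tau.
Hypothesis nons : forall E : set X, measurable E -> mu E = 0%E -> nu (tau @^-1` E) = 0%E.
Hypothesis p0 : (0 < p)%R.
Hypothesis yPhi : young_function Phi.

Lemma lorentz_indic (E : set X) (r : R) : measurable E -> mu E = r%:E ->
  lorentz_p1_norm mu p (\1_E : X -> R) = (r `^ (p^-1)%R)%:E.
Proof.
move=> mE muE; rewrite /lorentz_p1_norm.
have pn0 : (p^-1 != 0)%R by rewrite invr_eq0 gt_eqF.

transitivity (\int[lebesgue_measure]_(t in `[0%R, +oo[) ((r `^ (p^-1)%R)%:E * (\1_(`[0%R, 1%R[%classic : set R) t)%:E)); first apply: eq_integral.
  move=> t /set_mem /=; rewrite (@in_itv _ R) /= andbT => t0.
  rewrite indicE; case: (boolP (t \in (`[0%R, 1%R[%classic : set R))) => [/set_mem/= |].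
    rewrite (@in_itv _ R) /= t0 /= => t1.
    have -> : [set x | (t < `|(\1_E x : R)|)%R] = E.
      apply/seteqP; split => x /=.
        by rewrite indicE; case: (boolP (x \in E)) => [/set_mem //|]; rewrite normr0 ltNge t0.
      by move=> Ex; rewrite indicE (mem_set Ex) normr1.
    by rewrite muE mule1.
  move=> tn; have t1 : (1 <= t)%R.
    rewrite leNgt; apply/negP => t1; apply: (negP tn); apply/mem_set => /=.
    by rewrite (@in_itv _ R) /= t0 t1.
  have -> : [set x | (t < `|(\1_E x : R)|)%R] = set0.
    apply/seteqP; split => x //=; rewrite indicE.
    by case: (x \in E); rewrite ?normr1 ?normr0 => h; move: (le_lt_trans t1 h); rewrite ?ltxx ?ltr10.
  by rewrite measure0 mule0 /= powR0.
rewrite ge0_integralZl_EFin //; last exact: powR_ge0.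
- rewrite integral_indic //.
  rewrite (_ : _ `&` _ = `[0%R, 1%R[%classic); last first.
    apply/seteqP; split => x /=; rewrite !(@in_itv _ R) /= ?andbT.
    by case.
    by move=> h; split => //; case/andP: h.
  rewrite -[RHS]mule1; congr (_ * _).
  apply: eq_trans (lebesgue_measure_itv `[0%R, 1%R[) _.
  by rewrite /= lte_fin ltr01 sube0.
- apply/measurable_realfun.measurable_EFinP.
  exact: measurable_realfun.measurable_indic.
Qed.


Lemma mpre (E : set X) : measurable E -> measurable (tau @^-1` E).
Proof. by move=> mE; rewrite -[_ @^-1` _]setTI; exact: mtau. Qed.

Lemma orlicz_indic (E : set X) (l : R) : measurable E -> (0 < l)%R ->
  \int[nu]_(y in setT) (Phi (`|(\1_E : X -> R) (tau y)| / l))%:E =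
  (Phi (1 / l))%:E * nu (tau @^-1` E).
Proof.
move=> mE l0.
transitivity (\int[nu]_(y in setT) ((Phi (1 / l))%:E * (\1_(tau @^-1` E) y)%:E)).
  apply: eq_integral => y _; rewrite !indicE.
  case: (boolP (tau y \in E)) => [tE|tE].
    by rewrite (mem_set (set_mem tE : (tau @^-1` E) y)) normr1 mule1.
  have -> : (y \in tau @^-1` E) = false.
    by apply/negbTE; apply/negP => /set_mem /= h; apply: (negP tE); exact: mem_set.
  by rewrite normr0 mul0r mule0; case: yPhi => -> _ _ _.
rewrite ge0_integralZl_EFin //; first by rewrite integral_indic ?setIT //; exact: mpre.
all: try (by move=> x _; rewrite lee_fin).
all: try (apply/measurable_realfun.measurable_EFinP; exact/measurable_realfun.measurable_indic/mpre).
all: try (by apply: Phi_ge0 => //; rewrite divr_ge0 // ltW).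
Qed.


Lemma fwd_dir :
  (exists2 C : R, (0 < C)%R &
     forall f : X -> R, measurable_fun setT f ->
       (lorentz_p1_norm mu p f < +oo)%E ->
       (orlicz_norm nu Phi (f \o tau) <= C%:E * lorentz_p1_norm mu p f)%E) ->
  (exists2 D : R, (1 <= D)%R &
     forall E : set X, measurable E ->
       (nu (tau @^-1` E) <= vol_bound Phi D p (mu E))%E).
Proof.
move=> [C C0 HC].
exists (Num.max 1 (2 * C))%R; first by rewrite le_max lexx.
set Dm := (Num.max 1 (2 * C))%R.
have Dm0 : (0 < Dm)%R by rewrite lt_max ltr01.
move=> E mE.
case muE: (mu E) => [r| |] /=.
- case: eqP => [r0|/eqP rn0].
    by rewrite nons // muE r0.
  have r0 : (0 < r)%R by rewrite lt_def rn0 -lee_fin -muE measure_ge0.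
  set c := (r `^ p^-1)%R.
  have c0 : (0 < c)%R := powR_gt0 _ r0.
  have HL := lorentz_indic mE muE.
  have := HC (\1_E) (measurable_realfun.measurable_indic mE) ltac:(by rewrite HL ltry).
  rewrite HL -EFinM => Hle.
  have : orlicz_norm nu Phi (\1_E \o tau) < (2 * C * c)%:E.
    apply: le_lt_trans Hle _; rewrite lte_fin ltr_pM2r // ltr_pMl ?mulr_gt0 ?ltr1n //.
  rewrite /orlicz_norm => /ereal_inf_lt [_ [l [l0 Hl] <-]].
  rewrite lte_fin => lc.
  rewrite /= orlicz_indic // in Hl.
  set a := Phi (1 / (Dm * c)).
  have a0 : (0 < a)%R.
    by case: yPhi => _ Pp _ _; apply: Pp; rewrite divr_gt0 // mulr_gt0.
  have aPl : (a <= Phi (1 / l))%R.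
    apply: Phi_mono => //; first by rewrite divr_ge0 // mulr_ge0 // ltW.
    rewrite ler_pdivrMr ?mulr_gt0 // mulrC mulrA ler_pdivlMr // mul1r.
    apply: (le_trans (ltW lc)).
    by rewrite mulr1 ler_pM2r // le_max lexx orbT.
  case nuE: (nu (tau @^-1` E)) => [v| |].
  + rewrite nuE -EFinM lee_fin in Hl.
    have v0 : (0 <= v)%R by rewrite -lee_fin -nuE measure_ge0.
    rewrite lee_fin -[(a^-1)%R]mul1r ler_pdivlMr // mulrC.
    apply: le_trans Hl; rewrite ler_wpM2r //.
  + rewrite nuE gt0_muley ?lte_fin in Hl; last by apply: lt_le_trans aPl.
    by move: Hl; rewrite leye_eq.
  + by rewrite leNye.
- by rewrite leey.
- have : (0 <= mu E) by apply: measure_ge0.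
  by rewrite muE.
Qed.

End fwd.

Section gen.
Local Open Scope ereal_scope.
Context d (T : measurableType d) (R : realType).
Variable mu : {measure set T -> \bar R}.

Lemma integral_cst_indic (c : \bar R) (D A : set T) : measurable D -> measurable A ->
  \int[mu]_(x in D) (c * (\1_A x)%:E) = c * mu (D `&` A).
Proof.
move=> mD mA.
transitivity (\int[mu]_(x in D) ((cst c) \_ A) x).
  apply: eq_integral => x _; rewrite /patch indicE.
  by case: (x \in A); rewrite ?mule1 ?mule0.
by rewrite -integral_mkcondr integral_cst //; exact: measurableI.
Qed.

Lemma sum_single (I : eqType) (s : seq I) (F : I -> \bar R) (k : I) (G : \bar R) :
  uniq s -> (forall j, F j >= 0) -> (forall j, j != k -> F j = 0) -> F k <= G -> 0 <= G ->
  \sum_(j <- s) F j <= G.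
Proof.
move=> us F0 Fk FG G0.
case: (boolP (k \in s)) => ks.
  rewrite (bigD1_seq k) //= big1 ?adde0 // => j /Fk -> //.
by rewrite big1_seq // => j /andP[_ js]; apply: Fk; apply/negP => /eqP ?; subst j; rewrite js in ks.
Qed.

Lemma term_le_series (u : (\bar R)^nat) n : (forall k, 0 <= u k) ->
  u n <= \sum_(k <oo) u k.
Proof.
move=> u0; apply: le_trans (nneseries_lim_ge n.+1 _); last by move=> k _ _.
rewrite big_nat_recr //= leeDr //; exact: sume_ge0.
Qed.

End gen.

Lemma uniq_PN K : uniq (map Posz (iota 0 K) ++ map Negz (iota 0 K)).
Proof.
rewrite cat_uniq !map_inj_uniq ?iota_uniq //=; last by move=> a b [].
- rewrite andbT; apply/hasPn => _ /mapP[n _ ->]; apply/negP => /mapP[m _] //.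
- by move=> a b [].
Qed.

Lemma sum_PN (V : nmodType) (F : int -> V) K :
  (\sum_(n < K) (F (Posz n) + F (Negz n)) =
   \sum_(j <- map Posz (iota 0 K) ++ map Negz (iota 0 K)) F j)%R.
Proof.
rewrite big_split /= -(big_mkord xpredT (fun n : nat => F (Posz n))) -(big_mkord xpredT (fun n : nat => F (Negz n))) /index_iota subn0.
by rewrite big_cat !big_map.
Qed.

Section bwd.
Local Open Scope ereal_scope.
Variables (R : realType) (d1 d2 : measure_display)
    (X : measurableType d1) (Y : measurableType d2)
    (mu : {measure set X -> \bar R}) (nu : {measure set Y -> \bar R})
    (tau : Y -> X) (p : R) (Phi : R -> R).
Hypothesis mtau : measurable_fun setT tau.
Hypothesis p0 : (0 < p)%R.
Hypothesis yPhi : young_function Phi.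
Variable D : R.
Hypothesis D1 : (1 <= D)%R.
Hypothesis HD : forall E : set X, measurable E ->
       (nu (tau @^-1` E) <= vol_bound Phi D p (mu E))%E.
Variable f : X -> R.
Hypothesis mf : measurable_fun setT f.

Let Et (t : R) := [set x | (t < `|f x|)%R].
Let cj (j : int) := poweR (mu (Et (lv j))) p^-1%R.
Let Ij (j : int) := `]((lv j) / 2)%R, lv j]%classic : set R.

Lemma mEt t : measurable (Et t).
Proof.
have mF : measurable_fun setT (fun x => `|f x|)%R.
  exact: (measurableT_comp (@measurable_realfun.normr_measurable R setT) mf).
have := mF measurableT _ (@measurable_itv R `]t, +oo[).
rewrite setTI; congr measurable; apply/seteqP; split => x /=;
  by rewrite (@in_itv _ R) /= andbT.
Qed.

Lemma in_Ij j t : (t \in Ij j) = ((lv j / 2 < t)%R && (t <= lv j)%R).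
Proof.
rewrite /Ij; apply/idP/idP => [/set_mem /=|h]; first by rewrite (@in_itv _ R).
by apply/mem_set; rewrite /= (@in_itv _ R).
Qed.

Lemma cj_ge0 j : 0 <= cj j.
Proof. exact: poweR_ge0. Qed.

Lemma tside (s : seq int) : uniq s ->
  \sum_(j <- s) cj j * ((lv j) / 2)%:E <= lorentz_p1_norm mu p f.
Proof.
move=> us; rewrite /lorentz_p1_norm.
have -> : \sum_(j <- s) cj j * ((lv j) / 2)%:E =
    \int[lebesgue_measure]_(t in `[0%R, +oo[) (\sum_(j <- s) cj j * (\1_(Ij j) t)%:E).
  rewrite ge0_integral_sum //; last 2 first.
  - move=> j; apply: measurable_funeM; apply/measurable_realfun.measurable_EFinP.
    by apply: measurable_realfun.measurable_indic; exact: measurable_itv.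
  - by move=> j t _; rewrite mule_ge0 ?cj_ge0 // lee_fin.
  apply: eq_bigr => j _.
  rewrite integral_cst_indic //; last exact: measurable_itv.
  congr (_ * _).
  have lj : (0 < @lv R j)%R by apply: lv_gt0.
  rewrite (_ : _ `&` _ = Ij j); last first.
    apply/seteqP; split => x /=; first by case.
    move=> hx; split => //; move: hx; rewrite /Ij /= !(@in_itv _ R) /= andbT.
    by move=> /andP[/ltW h _]; apply: le_trans h; rewrite divr_ge0 // ltW.
  apply/esym; apply: eq_trans (lebesgue_measure_itv _) _.
  rewrite /= lte_fin ifT; last by rewrite ltr_pdivrMr // ltr_pMr // ltr1n.
  by rewrite -EFinD; congr EFin; field.
apply: le_integral_nm.
  by move=> t _; rewrite sume_ge0 // => j _; rewrite mule_ge0 ?cj_ge0 // lee_fin.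
move=> t; rewrite /= (@in_itv _ R) /= andbT => t0.
case: (leP t 0%R) => tle.
  rewrite big1 ?poweR_ge0 // => j _; rewrite indicE in_Ij.
  have : (0 < @lv R j / 2)%R by rewrite divr_gt0 ?lv_gt0.
  by move=> h; rewrite ltNge (ltW (le_lt_trans tle h)) /= mule0.
have [k /andP[hk1 hk2]] := lv_exists tle.
have hI : (t \in Ij (k + 1)).
  by rewrite in_Ij lvS mulrC mulKf ?pnatr_eq0 // hk1 hk2.
apply: (sum_single (k := (k + 1)%R)) => //.
- by move=> j; rewrite mule_ge0 ?cj_ge0 // lee_fin.
- move=> j jk; rewrite indicE.
  case: (boolP (t \in Ij j)) => hj; last by rewrite mule0.
  move: hj hI; rewrite !in_Ij => hj hI.
  by have := lv_uniq hj hI => /eqP; rewrite (negbTE jk).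
- rewrite indicE hI mule1 /cj; apply: gt0_ler_poweR.
  + by rewrite invr_ge0 ltW.
  + by rewrite in_itv /= measure_ge0 leey.
  + by rewrite in_itv /= measure_ge0 leey.
  apply: le_measure; rewrite ?inE; try exact: mEt.
  move=> x /=; apply: le_lt_trans.
  by move: hI; rewrite in_Ij => /andP[].
- exact: poweR_ge0.
Qed.


Lemma cj_bound j : cj j * ((lv j) / 2)%:E <= lorentz_p1_norm mu p f.
Proof. by have := tside (s := [:: j]) erefl; rewrite big_seq1. Qed.

Let Aj (j : int) := tau @^-1` (Et (lv j) `\` Et (2 * lv j)).

Lemma mAj j : measurable (Aj j).
Proof.
rewrite /Aj -[_ @^-1` _]setTI; apply: mtau => //.
by apply: measurableD; exact: mEt.
Qed.

Let Tj (l : R) (j : int) (y : Y) : \bar R :=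
  (Phi (2 * lv j / l))%:E * (\1_(Aj j) y)%:E.

Lemma yside (l : R) (w : int -> R) : (0 < l)%R -> (forall j, 0 <= w j)%R ->
  (forall j, (Phi (2 * lv j / l))%:E * nu (tau @^-1` Et (lv j)) <= (w j)%:E) ->
  (forall K, \sum_(n < K) (w (Posz n) + w (Negz n)) <= 1)%R ->
  \int[nu]_(y in setT) (Phi (`|(f \o tau) y| / l))%:E <= 1.
Proof.
move=> l0 w0 Hw HK.
have P0 : Phi 0 = 0%R by case: yPhi.
have PL j : (0 <= Phi (2 * lv j / l))%R.
  apply: (Phi_ge0 yPhi); apply: divr_ge0; last exact: ltW.
  by apply: mulr_ge0 => //; exact: ltW (lv_gt0 _).
have T0 j y : 0 <= Tj l j y by rewrite mule_ge0 // lee_fin.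
have mT j : measurable_fun setT (Tj l j : Y -> \bar R).
  rewrite /Tj; apply: measurable_funeM; apply/measurable_realfun.measurable_EFinP.
  exact/measurable_realfun.measurable_indic/mAj.
set G := fun y => \sum_(n <oo) (Tj l (Posz n) y + Tj l (Negz n) y).
apply: (@le_trans _ _ (\int[nu]_(y in setT) G y)).
  apply: le_integral_nm.
    by move=> y _; rewrite lee_fin; apply: (Phi_ge0 yPhi); apply: divr_ge0 => //; exact: ltW.
  move=> y _ /=.
  case: (eqVneq (`|f (tau y)|)%R 0%R) => [->|Fn0].
    by rewrite mul0r P0; apply: nneseries_ge0 => n _ _; rewrite adde_ge0.
  have Fp : (0 < `|f (tau y)|)%R by rewrite lt_def Fn0 normr_ge0.
  have [k /andP[hk1 hk2]] := lv_exists Fp.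
  have yA : Aj k y.
    by rewrite /Aj /Et /=; split => //=; apply/negP; rewrite -leNgt.
  have : (Phi (`|f (tau y)| / l))%:E <= Tj l k y.
    rewrite /Tj indicE mem_set // mule1 lee_fin.
    apply: (Phi_mono yPhi); first by rewrite divr_ge0 ?ltW.
    by rewrite ler_pM2r // invr_gt0.
  move/le_trans; apply.
  case: k {hk1 hk2 yA} => n.
    apply: le_trans (term_le_series (u := fun n => Tj l (Posz n) y + Tj l (Negz n) y) n _).
      by rewrite leeDl.
    by move=> m; rewrite adde_ge0.
  apply: le_trans (term_le_series (u := fun n => Tj l (Posz n) y + Tj l (Negz n) y) n _).
    by rewrite leeDr.
  by move=> m; rewrite adde_ge0.
rewrite /G integral_nneseries //; try by [move=> n y _; rewrite adde_ge0 | move=> n; exact: (emeasurable_funD (mT _) (mT _))].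
have IT j : \int[nu]_(y in setT) Tj l j y <= (w j)%:E.
  rewrite /Tj integral_cst_indic //; last exact: mAj.
  rewrite setTI; apply: le_trans (Hw j).
  apply: lee_wpmul2l; first by rewrite lee_fin.
  apply: le_measure; rewrite ?inE.
  - exact: mAj.
  - by rewrite -[_ @^-1` _]setTI; apply: mtau => //; exact: mEt.
  by move=> y [].
apply: (@le_trans _ _ (\sum_(n <oo) ((w (Posz n))%:E + (w (Negz n))%:E))).
  apply: lee_nneseries => n _.
    by rewrite integral_ge0 // => y _; rewrite adde_ge0.
  rewrite ge0_integralD //; first exact: leeD.
apply: lime_le; first by apply: is_cvg_nneseries => n _ _; rewrite adde_ge0 // lee_fin.
apply: nearW => K; rewrite big_mkord.
under eq_bigr do rewrite -EFinD.
by rewrite sumEFin lee_fin.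
Qed.


Lemma N_ge0 : 0 <= lorentz_p1_norm mu p f.
Proof. by apply: integral_ge0 => t _; exact: poweR_ge0. Qed.

Lemma cj0 j : cj j = 0 -> mu (Et (lv j)) = 0.
Proof.
rewrite /cj; case E: (mu (Et (lv j))) => [r| |] //=.
- by move=> [] /powR_eq0_eq0 ->.
- by rewrite ifF // invr_eq0 gt_eqF.
- have : (0 <= mu (Et (lv j))) by apply: measure_ge0.
  by rewrite E.
Qed.

Lemma bwd_bound : lorentz_p1_norm mu p f < +oo ->
  orlicz_norm nu Phi (f \o tau) <= (4 * D)%:E * lorentz_p1_norm mu p f.
Proof.
move=> Nfin.
have N0 := N_ge0.
have D0 : (0 < D)%R by apply: lt_le_trans D1; exact: ltr01.
case NE: (lorentz_p1_norm mu p f) N0 Nfin => [Nr| |] // N0 _.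
have lvp j : (0 < @lv R j / 2)%R by rewrite divr_gt0 ?lv_gt0.
have cjb j : cj j * ((lv j) / 2)%:E <= Nr%:E by rewrite -NE; exact: cj_bound.
rewrite lee_fin in N0; case: (eqVneq Nr 0%R) => [Nr0|Nrn0].
  subst Nr; rewrite mule0.
  have mu0 j : mu (Et (lv j)) = 0.
    apply: cj0; apply/eqP; rewrite eq_le cj_ge0 andbT.
    by have := cjb j; rewrite -lee_pdivlMr ?mul0e.
  have inS l : (0 < l)%R -> ([set (l%:E)%E | l in
     [set l : R | (0 < l)%R /\
        (\int[nu]_(y in setT) (Phi (`|(f \o tau) y| / l))%:E <= 1)%E]] (l%:E)).
    move=> l0; exists l => //; split => //.
    apply: (yside (w := fun _ => 0%R)) => //.
    - move=> j; have := HD (mEt (lv j)); rewrite mu0 /= eqxx => h.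
      have -> : nu (tau @^-1` Et (lv j)) = 0.
        by apply/eqP; rewrite eq_le h measure_ge0.
      by rewrite mule0.
    - by move=> K; rewrite big1 ?ler01 // => n _; rewrite addr0.
  apply/lee_addgt0Pr => e e0; rewrite add0e /orlicz_norm.
  exact: ereal_inf_lbound (inS e e0).
have Nrp : (0 < Nr)%R by rewrite lt_def Nrn0 N0.
set l := (4 * D * Nr)%R.
have l0 : (0 < l)%R by rewrite !mulr_gt0.
rewrite -EFinM; apply: ereal_inf_lbound; exists l => //; split => //.
apply: (yside (w := fun j => fine (cj j) * (lv j / 2) / Nr)%R) => //.
- move=> j; apply: divr_ge0; last exact: ltW.
  by apply: mulr_ge0; [exact: fine_ge0 (cj_ge0 j)| exact: ltW].
- move=> j; have hb := cjb j; have hv := HD (mEt (lv j)).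
  have mu0 : 0 <= mu (Et (lv j)) by apply: measure_ge0.
  move: hb hv mu0; rewrite /cj; case: (mu (Et (lv j))) => [r| |] //=; last first.
    by rewrite ifF ?invr_eq0 ?gt_eqF // gt0_mulye ?lte_fin // leye_eq.
  rewrite lee_fin => hb hv r0.
  case: eqP hv => [r00 hv|/eqP rn0 hv].
    have -> : nu (tau @^-1` Et (lv j)) = 0 by apply/eqP; rewrite eq_le hv measure_ge0.
    rewrite mule0 lee_fin; apply: divr_ge0; last exact: ltW.
    by apply: mulr_ge0; [exact: powR_ge0| exact: ltW].
  have rp : (0 < r)%R by rewrite lt_def rn0 -lee_fin r0.
  set c := (r `^ p^-1)%R in hb hv *.
  have c0 : (0 < c)%R by apply: powR_gt0.
  set x := (1 / (D * c))%R in hv.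
  set a := (c * (lv j / 2) / Nr)%R.
  have x0 : (0 < x)%R by rewrite divr_gt0 // mulr_gt0.
  have Px : (0 < Phi x)%R by case: yPhi => _ Pp _ _; apply: Pp.
  have a0 : (0 <= a)%R by apply: divr_ge0; [apply: mulr_ge0; [exact: ltW|exact: ltW (lvp j)]|exact: ltW].
  have a1 : (a <= 1)%R by rewrite ler_pdivrMr // mul1r.
  have -> : (2 * lv j / l = a * x)%R.
    rewrite /a /x /l; field.
    by rewrite gt_eqF ?c0 //= gt_eqF ?Nrp //= gt_eqF ?D0.
  apply: le_trans (lee_wpmul2l _ hv) _.
    by rewrite lee_fin; apply: (Phi_ge0 yPhi); apply: mulr_ge0 => //; exact: ltW.
  rewrite -EFinM lee_fin -/(_ / _)%R ler_pdivrMr //.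
  by apply: (Phi_scale yPhi) => //; [rewrite a0 a1| exact: ltW].
- move=> K; rewrite (sum_PN (fun j => fine (cj j) * (lv j / 2) / Nr)%R K).
  rewrite -mulr_suml ler_pdivrMr // mul1r.
  have cjfin j : cj j \is a fin_num.
    have := cjb j; have := cj_ge0 j; case: (cj j) => [c| |] //= _.
    by rewrite gt0_mulye ?lte_fin // leye_eq.
  have := tside (uniq_PN K); rewrite NE.
  have -> : \sum_(j <- map Posz (iota 0 K) ++ map Negz (iota 0 K)) cj j * (lv j / 2)%:E =
      (\sum_(j <- map Posz (iota 0 K) ++ map Negz (iota 0 K)) fine (cj j) * (lv j / 2))%:E.
    rewrite -sumEFin; apply: eq_bigr => j _.
    by rewrite -[in LHS](fineK (cjfin j)) -EFinM.
  by rewrite lee_fin.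
Qed.

End bwd.

Unset Implicit Arguments.

Theorem theorem1p5 (R : realType) (d1 d2 : measure_display)
    (X : measurableType d1) (Y : measurableType d2)
    (mu : {measure set X -> \bar R}) (nu : {measure set Y -> \bar R})
    (tau : Y -> X) (p : R) (Phi : R -> R) :
  sigma_finite setT mu -> sigma_finite setT nu ->
  measurable_fun setT tau ->
  (forall E : set X, measurable E -> mu E = 0%E -> nu (tau @^-1` E) = 0%E) ->
  0 < p ->
  young_function Phi ->
  (exists2 C : R, 0 < C &
     forall f : X -> R, measurable_fun setT f ->
       (lorentz_p1_norm mu p f < +oo)%E ->
       (orlicz_norm nu Phi (f \o tau) <= C%:E * lorentz_p1_norm mu p f)%E)
  <->
  (exists2 D : R, 1 <= D &
     forall E : set X, measurable E ->
       (nu (tau @^-1` E) <= vol_bound Phi D p (mu E))%E).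
Proof.
move=> _ _ mtau nons p0 yPhi; split.
  by apply: fwd_dir.
move=> [D D1 HD]; exists (4 * D).
  by rewrite mulr_gt0 // (lt_le_trans ltr01 D1).
move=> f mf Nfin; exact: bwd_bound.
Qed.
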